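(* Let $S=(U,F)$ be an undirected graph on $q$ nodes, possibly with self-loops, and let $n'$ be a nonnegative integer. Let $A'\in\mathcal{A}(S)$ be such that $n'A'$ is integer-valued and $\operatorname{diag}A'=0$, and set $x'=A'\mathbf{1}$. Then the directed graph $\vec G'$, where $G'=M(n'x',S)$, admits a Hamiltonian decomposition $H'$ with $\rho(H')=A'$ and such that every cycle of $H'$ is simple.
   Context: An undirected graph $G=(V,E)$ without self-loops is complete $S$-multipartite if there is a map $\pi:V\to U$ such that for distinct $v,w\in V$, $(v,w)\in E$ iff $(\pi(v),\pi(w))\in F$; $M(w,S)$ denotes the complete $S$-multipartite graph with $|\pi^{-1}(u_i)|=w_i$. $\vec G$ replaces each edge $(v,w)$ by the directed edges $vw$ and $wv$. A Hamiltonian decomposition of a digraph is a spanning subgraph that is a node-disjoint union of directed cycles covering all nodes. For a Hamiltonian decomposition $H$ of $\vec G$ with $G$ on $n$ nodes, $\rho(H)=\frac1n[n_{ij}(H)]$ where $n_{ij}(H)$ counts edges of $H$ from $\pi^{-1}(u_i)$ to $\pi^{-1}(u_j)$. A directed cycle is simple if its image under $\pi$ is a cycle (no repeated nodes) of $\vec S$. $\mathcal{A}(S)$ is the set of nonnegative $q\times q$ matrices $A$ with $a_{ij}=0$ whenever $(u_i,u_j)\notin F$, $A\mathbf{1}=A^\top\mathbf{1}$, and $\mathbf{1}^\top A\mathbf{1}=1$. *)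

(* Defs.v *)
From HB Require Import structures.
From mathcomp Require Import all_boot all_order all_algebra all_fingroup.
Set Implicit Arguments. Unset Strict Implicit. Unset Printing Implicit Defensive.
Import Order.TTheory GRing.Theory Num.Theory.
Local Open Scope ring_scope.

(* A complete S-multipartite graph G on a finite node type V is
   given by the map pi : V -> 'I_q: distinct v, w are adjacent iff
   F (pi v) (pi w). *)
Definition mpart_edge (q : nat) (F : rel 'I_q) (V : finType) (pi : V -> 'I_q)
  (v w : V) : bool := (v != w) && F (pi v) (pi w).

Definition inA (R : numDomainType) (q : nat) (F : rel 'I_q) (A : 'M[R]_q) : Prop :=
  [/\ forall i j, 0 <= A i j,
      forall i j, ~~ F i j -> A i j = 0,
      forall i, \sum_j A i j = \sum_j A j i
    & \sum_i \sum_j A i j = 1].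

(* A Hamiltonian decomposition of \vec G (spanning, node-disjoint union of
   directed cycles covering all nodes) is encoded by its successor map, a
   permutation H of V, every arc v -> H v being an arc of \vec G. *)
Definition ham_decomp (q : nat) (F : rel 'I_q) (V : finType) (pi : V -> 'I_q)
  (H : {perm V}) : Prop :=
  forall v, mpart_edge F pi v (H v).

Definition nij (q : nat) (V : finType) (pi : V -> 'I_q) (H : {perm V})
  (i j : 'I_q) : nat := #|[set v | (pi v == i) && (pi (H v) == j)]|.

Definition rho (R : fieldType) (q : nat) (V : finType) (pi : V -> 'I_q)
  (H : {perm V}) : 'M[R]_q :=
  \matrix_(i, j) ((#|V|%:R)^-1 * (nij pi H i j)%:R).

(* Every cycle of H is simple: its image under pi has no repeated nodes,
   i.e. pi is injective on every cycle (orbit) of H.  (That consecutive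
   images are arcs of \vec S follows from ham_decomp.) *)
Definition simple_cycles (q : nat) (V : finType) (pi : V -> 'I_q)
  (H : {perm V}) : Prop :=
  forall v w, w \in porbit H v -> pi w = pi v -> w = v.

(* Main.v *)
Require Import Defs.
From HB Require Import structures.
From mathcomp Require Import all_boot all_order all_algebra all_fingroup.
Set Implicit Arguments. Unset Strict Implicit. Unset Printing Implicit Defensive.
Import Order.TTheory GRing.Theory Num.Theory.
Section Step1.
Variable q : nat.

Lemma sum_eq1 (a : 'I_q) (b : bool) :
  \sum_(j : 'I_q) ((b && (a == j)) : nat) = b.
Proof.
rewrite (bigD1 a) //= eqxx andbT big1 ?addn0 // => j /negbTE.
by rewrite eq_sym => ->; rewrite andbF.
Qed.

Lemma row_ind (c : seq 'I_q) i :
  \sum_j (((i \in c) && (next c i == j)) : nat) = (i \in c).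
Proof. exact: sum_eq1. Qed.

Lemma col_ind (c : seq 'I_q) i : uniq c ->
  \sum_j (((j \in c) && (next c j == i)) : nat) = (i \in c).
Proof.
move=> uc; rewrite -(sum_eq1 (prev c i) (i \in c)); apply: eq_bigr => j _.
congr nat_of_bool.
case ic: (i \in c) => /=; last first.
  apply/negbTE/negP=> /andP[jc /eqP e]; move: jc; rewrite -mem_next e ic //.
apply/andP/idP => [[jc /eqP <-]|/eqP <-]; first by rewrite prev_next.
by rewrite mem_prev ic next_prev.
Qed.

Lemma decomp (N : 'I_q -> 'I_q -> nat) :
  (forall i, \sum_j N i j = \sum_j N j i) ->
  exists cs : seq (seq 'I_q), all uniq cs /\
    forall i j, N i j = count (fun c => (i \in c) && (next c i == j)) cs.
Proof.
move: {-1}(\sum_i \sum_j N i j) (leqnn (\sum_i \sum_j N i j)) => b.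
elim: b N => [|b IH] N hb hbal.
  exists [::]; split => // i j /=.
  move: hb; rewrite leqn0 sum_nat_eq0 => /forallP /(_ i) /implyP /(_ isT).
  by rewrite sum_nat_eq0 => /forallP /(_ j) /implyP /(_ isT) /eqP.
case: (boolP [exists i, 0 < \sum_j N i j]) => [/existsP [x Px]|]; last first.
  move=> /existsPn allz; exists [::]; split => // i j /=.
  move: (allz i); rewrite lt0n negbK sum_nat_eq0 => /forallP /(_ j) /implyP.
  by move/(_ isT)/eqP.
pose P i := 0 < \sum_j N i j.
pose s i := odflt i [pick j | 0 < N i j].
have Ps i : P i -> 0 < N i (s i).
  rewrite /P /s; case: pickP => //= hz.
  by rewrite (eq_bigr (fun=> 0)) ?big_const_idem // => j _; apply/eqP; rewrite -leqn0 leqNgt hz.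
have Pcl i : P i -> P (s i).
  move=> /Ps h; rewrite /P hbal (bigD1 i) //=.
  by apply: leq_trans h (leq_addr _ _).
have Piter n i : P i -> P (iter n s i).
  by elim: n => //= n IHn /IHn /Pcl.
have [a alt eqa] : exists2 a, a < fingraph.order s x & iter (fingraph.order s x) s x = iter a s x.
  by apply/trajectP; apply: looping_order.
pose y := iter a s x.
pose p := fingraph.order s x - a.
have p_gt0 : 0 < p by rewrite subn_gt0.
have iterp z : fconnect s y z -> iter p s z = z.
  have yp : iter p s y = y.
    by rewrite /y -iterD /p subnK ?eqa //; exact: ltnW.
  move=> /iter_findex <-; rewrite -iterD addnC iterD yp //.
have Py : P y by apply: Piter.
pose S := fconnect s y.
have Sin : {homo s : z / z \in S}.
  by move=> z; rewrite !inE => hz; apply: connect_trans hz (fconnect1 _ _).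
have Sinj : {in S &, injective s}.
  move=> z1 z2 h1 h2 e.
  have h z : z \in S -> z = iter p.-1 s (s z).
    by move=> hz; rewrite -iterSr prednK // iterp.
  by rewrite (h z1) // (h z2) // e.
pose c := fingraph.orbit s y.
have fc : fcycle s c by apply: (cycle_orbit_in Sin Sinj); exact: connect0.
have uc : uniq c by apply: orbit_uniq.
have nextc z : z \in c -> next c z = s z.
  by move=> zc; have /eqP := next_cycle fc zc.
have Pc z : z \in c -> P z.
  rewrite -fconnect_orbit => /iter_findex <-; exact: Piter.
have yc : y \in c by apply: in_orbit.
pose ind i j : nat := (i \in c) && (next c i == j).
have indle i j : ind i j <= N i j.
  rewrite /ind; case ic: (i \in c) => //=; case: eqP => //= <-.
  by rewrite nextc //; apply: Ps; apply: Pc.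
pose N' i j := N i j - ind i j.
have NE i j : N i j = N' i j + ind i j by rewrite subnK.
have rowE i : \sum_j N i j = \sum_j N' i j + (i \in c).
  by rewrite -(row_ind c i) -big_split /=; apply: eq_bigr => j _; apply: NE.
have colE i : \sum_j N j i = \sum_j N' j i + (i \in c).
  by rewrite -(col_ind i uc) -big_split /=; apply: eq_bigr => j _; apply: NE.
have HIH : exists cs : seq (seq 'I_q), all uniq cs /\
    forall i j, N' i j = count (fun c => (i \in c) && (next c i == j)) cs.
  apply: IH; last by move=> i; apply/eqP; rewrite -(eqn_add2r (i \in c)) -rowE -colE hbal.
  rewrite -ltnS; apply: leq_trans hb.
  rewrite [X in _ < X](eq_bigr (fun i => \sum_j N' i j + (i \in c))) //.
  rewrite big_split /= -[X in X < _]addn0 ltn_add2l (bigD1 y) //= yc //.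
case: HIH => cs [ucs hcs].
exists (c :: cs); split; first by rewrite /= uc ucs.
by move=> i j /=; rewrite NE hcs addnC.
Qed.
End Step1.
Lemma count_row (q : nat) (cs : seq (seq 'I_q)) i :
  \sum_j count (fun c => (i \in c) && (next c i == j)) cs = count (fun c => i \in c) cs.
Proof.
elim: cs => [|c cs IH] /=; first by rewrite big1.
rewrite big_split /= IH; congr (_ + _).
case: (i \in c) => /=; last by rewrite big1.
by rewrite (bigD1 (next c i)) //= eqxx big1 // => j /negbTE; rewrite eq_sym => ->.
Qed.

Lemma card_setE (T : finType) (P : pred T) : #|[set v | P v]| = count P (enum T).
Proof.
rewrite cardsE cardE /enum_mem size_filter -enumT count_filter.
by apply: eq_count => v; rewrite /= ?inE ?andbT.
Qed.

Section Lift.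
Variables (q : nat) (V : finType) (pi : V -> 'I_q) (cs : seq (seq 'I_q)).
Variable N : 'I_q -> 'I_q -> nat.
Hypothesis ucs : all uniq cs.
Hypothesis hN : forall i j, N i j = count (fun c => (i \in c) && (next c i == j)) cs.
Hypothesis hfib : forall i, #|[set v | pi v == i]| = \sum_j N i j.

Let cyc k := nth [::] cs k.
Let Fs i := [seq v <- enum V | pi v == i].
Let Kn i := [seq k <- iota 0 (size cs) | i \in cyc k].

Let uFs i : uniq (Fs i). Proof. by rewrite filter_uniq ?enum_uniq. Qed.
Let uKn i : uniq (Kn i). Proof. by rewrite filter_uniq ?iota_uniq. Qed.
Let memFs i v : (v \in Fs i) = (pi v == i).
Proof. by rewrite mem_filter mem_enum andbT. Qed.
Let memKn i k : (k \in Kn i) = (k < size cs) && (i \in cyc k).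
Proof. by rewrite mem_filter mem_iota add0n andbC. Qed.
Let cntcs (p : pred (seq 'I_q)) : count (fun k => p (cyc k)) (iota 0 (size cs)) = count p cs.
Proof.
rewrite -[in RHS](mkseq_nth [::] cs) /mkseq count_map; apply: eq_count => k //.
Qed.
Let sizeE i : size (Fs i) = size (Kn i).
Proof.
have rowN : \sum_j N i j = count (fun c => i \in c) cs.
  by rewrite -count_row; apply: eq_bigr => j _; apply: hN.
rewrite !size_filter (cntcs (fun c => i \in c)) -rowN -hfib cardE.
rewrite -cardE cardsE cardE /enum_mem size_filter -enumT. rewrite count_filter.
by apply: eq_count => v; rewrite /= ?inE ?andbT.
Qed.
Let ucyc k : uniq (cyc k).
Proof.
case: (ltnP k (size cs)) => hk; first by apply: (allP ucs); apply: mem_nth.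
by rewrite /cyc nth_default.
Qed.

Let K v := nth 0 (Kn (pi v)) (index v (Fs (pi v))).

Let KP v : K v \in Kn (pi v).
Proof. by rewrite /K mem_nth // -sizeE index_mem memFs. Qed.

Let Gv i k v := nth v (Fs i) (index k (Kn i)).
Let GP i k v : k \in Kn i -> pi (Gv i k v) = i /\ K (Gv i k v) = k.
Proof.
move=> hk; have hlt : index k (Kn i) < size (Fs i) by rewrite sizeE index_mem.
have hm : Gv i k v \in Fs i by apply: mem_nth.
have pe : pi (Gv i k v) = i by apply/eqP; rewrite -memFs.
split => //; rewrite /K pe /Gv index_uniq // nth_index //.
Qed.

Let Kinj v w : pi v = pi w -> K v = K w -> v = w.
Proof.
move=> e; rewrite /K -e; set i := pi v => hk.
have hv : v \in Fs i by rewrite memFs.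
have hw : w \in Fs i by rewrite memFs -e.
move/eqP: hk; rewrite nth_uniq ?uKn -?sizeE ?index_mem // => /eqP hi.
by rewrite -(nth_index v hv) hi nth_index.
Qed.

Let H0 v := Gv (next (cyc (K v)) (pi v)) (K v) v.
Let H0P v : pi (H0 v) = next (cyc (K v)) (pi v) /\ K (H0 v) = K v.
Proof.
apply: GP; rewrite memKn mem_next.
by move: (KP v); rewrite memKn.
Qed.

Let H0inj : injective H0.
Proof.
move=> v w e; have [p1 k1] := H0P v; have [p2 k2] := H0P w.
have ek : K v = K w by rewrite -k1 -k2 e.
move: p1; rewrite e p2 ek => /(can_inj (prev_next (ucyc _))) hp; exact: Kinj (esym hp) ek.
Qed.

Lemma lift_ex : exists H : {perm V},
  [/\ forall v, 0 < N (pi v) (pi (H v)),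
      forall i j, nij pi H i j = N i j & simple_cycles pi H].
Proof.
exists (perm H0inj); split.
- move=> v; rewrite permE (proj1 (H0P v)) hN -has_count; apply/hasP.
  exists (cyc (K v)); last by rewrite eqxx andbT; move: (KP v); rewrite memKn => /andP[].
  by apply: mem_nth; move: (KP v); rewrite memKn => /andP[].
- move=> i j; rewrite /nij card_setE hN.
  have mapK : [seq K v | v <- Fs i] = Kn i.
    apply: (@eq_from_nth _ 0); first by rewrite size_map sizeE.
    move=> t; rewrite size_map => ht.
    have fun0 : V by move: ht; case: (Fs i) => [|x _] //.
    have hm : nth fun0 (Fs i) t \in Fs i by apply: mem_nth.
    rewrite (nth_map fun0) // /K.
    move: (hm); rewrite memFs => /eqP ->.
    by rewrite index_uniq.
  transitivity (count (fun v => pi (perm H0inj v) == j) (Fs i)).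
    by rewrite [RHS]count_filter; apply: eq_count => v; rewrite /= andbC.
  transitivity (count (fun k => next (cyc k) i == j) (Kn i)).
    rewrite -mapK count_map; apply: eq_in_count => v; rewrite memFs => /eqP pv /=.
    by rewrite permE (proj1 (H0P v)) pv.
  rewrite -(cntcs (fun c => (i \in c) && (next c i == j))) count_filter.
  by apply: eq_count => k; rewrite /= andbC.
- move=> v w /porbitP [n ->] e; apply: Kinj => //.
  rewrite permX; clear e; elim: n => //= n IH.
  by rewrite permE (proj2 (H0P _)).
Qed.
End Lift.

Local Open Scope ring_scope.

Theorem lemma8 (R : realFieldType) (q : nat) (F : rel 'I_q)
  (F_sym : symmetric F) (n' : nat) (n'_gt0 : (0 < n')%N)
  (A : 'M[R]_q) (hA : inA F A)
  (hint : forall i j, exists z : int, n'%:R * A i j = z%:~R)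
  (hdiag : forall i, A i i = 0)
  (V : finType) (pi : V -> 'I_q)
  (hfib : forall i, (#|[set v | pi v == i]|)%:R = n'%:R * \sum_j A i j) :
  exists H : {perm V},
    [/\ ham_decomp F pi H, rho R pi H = A & simple_cycles pi H].
Proof.
case: hA => hA0 hAF hAbal hA1.
have hex : forall i j, exists m : nat, n'%:R * A i j == m%:R.
  move=> i j; case: (hint i j) => z hz.
  have : 0 <= z%:~R :> R by rewrite -hz mulr_ge0 ?ler0n.
  rewrite ler0z; case: z hz => // m hz _; exists m; rewrite hz //.
pose N i j := xchoose (hex i j).
have hNR i j : (N i j)%:R = n'%:R * A i j.
  by apply/esym/eqP; apply: (xchooseP (hex i j)).
have n'0 : n'%:R != 0 :> R by rewrite pnatr_eq0 -lt0n.
have Ndiag i : N i i = 0%N.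
  by apply/eqP; rewrite -(eqr_nat R) hNR hdiag mulr0.
have NF i j : (0 < N i j)%N -> F i j.
  move=> h; apply/negP => /negP /hAF e; move: h; rewrite lt0n.
  by rewrite -(eqr_nat R) hNR e mulr0 eqxx.
have rowR i : (\sum_j N i j)%:R = n'%:R * \sum_j A i j :> R.
  by rewrite natr_sum mulr_sumr; apply: eq_bigr => j _; apply: hNR.
have colR i : (\sum_j N j i)%:R = n'%:R * \sum_j A j i :> R.
  by rewrite natr_sum mulr_sumr; apply: eq_bigr => j _; apply: hNR.
have bal i : (\sum_j N i j = \sum_j N j i)%N.
  by apply/eqP; rewrite -(eqr_nat R) rowR colR hAbal.
have fib i : #|[set v | pi v == i]| = (\sum_j N i j)%N.
  by apply/eqP; rewrite -(eqr_nat R) rowR hfib.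
have cardV : #|V|%:R = n'%:R :> R.
  rewrite -sum1_card (partition_big pi xpredT) //=.
  rewrite natr_sum (eq_bigr (fun i => n'%:R * \sum_j A i j)).
    by rewrite -mulr_sumr hA1 mulr1.
  by move=> i _; rewrite sum1dep_card hfib.
have [cs [ucs hcs]] := decomp bal.
have [H [Hpos Hnij Hsimp]] := lift_ex ucs hcs fib.
exists H; split => //.
- move=> v; rewrite /mpart_edge (NF _ _ (Hpos v)) andbT.
  apply/negP => /eqP e; move: (Hpos v); rewrite -e Ndiag //.
- apply/matrixP => i j; rewrite mxE Hnij hNR cardV mulKf //.
Qed.
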